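(* If $\ell$ is a bisector of a quadrilateral $Q$ in $K^2$, then there is a unique bisector $\ell'$ of $Q$ for which $\{\ell,\ell'\}$ is a $Q$-pair.
   Context: $K$ is a field of characteristic $\neq 2$. Every line $L$ in $K^2$ has an equation $tX-uY+v=0$ normalized so that $t=1$ if $u=0$ and $u=1$ if $u\neq 0$; coefficients denoted $t_L,u_L,v_L$. A quadrilateral $Q=ABA'B'$ consists of four distinct lines $A,B,A',B'$ (sides), not all through one point, with adjacent sides ($A,B$; $B,A'$; $A',B'$; $B',A$) not parallel; opposite sides may be parallel. Vertices: $A\cap B$, $B\cap A'$, $A'\cap B'$, $B'\cap A$ (two may coincide if three sides are concurrent). The centroid is the average of the four vertices. Let $\alpha=t_Au_Bu_{A'}u_{B'}-u_At_Bu_{A'}u_{B'}+u_Au_Bt_{A'}u_{B'}-u_Au_Bu_{A'}t_{B'}$, $\beta=t_Au_Bt_{A'}u_{B'}-u_At_Bu_{A'}t_{B'}$, $\gamma=t_At_Bt_{A'}u_{B'}-t_At_Bu_{A'}t_{B'}+t_Au_Bt_{A'}t_{B'}-u_At_Bt_{A'}t_{B'}$, and $\langle \mathbf v,\mathbf w\rangle_Q=\mathbf v^T\begin{pmatrix}\gamma&-\beta\\-\beta&\alpha\end{pmatrix}\mathbf w$. Lines $\ell_1,\ell_2$ are $Q$-orthogonal if $\langle (u_{\ell_1},t_{\ell_1}),(u_{\ell_2},t_{\ell_2})\rangle_Q=0$. A line $\ell$ crosses a pair $\{\ell_1,\ell_2\}$ if distinct from both and not parallel to both; $\mathrm{mid}_{\{\ell_1,\ell_2\}}(\ell)$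 is the midpoint of the points where $\ell$ meets $\ell_1,\ell_2$ (the point at infinity of $\ell$ if one is at infinity). $\ell$ bisects $Q$ (is a bisector) if $\mathrm{mid}_{\mathsf P}(\ell)$ is the same for all pairs $\mathsf P$ among $\{A,A'\},\{B,B'\}$ that $\ell$ crosses; this common point is the midpoint of the bisector. A pair $\{\ell_1,\ell_2\}$ of bisectors (possibly $\ell_1=\ell_2$) is a $Q$-pair if the midpoint of their midpoints is the centroid of $Q$ and $\ell_1,\ell_2$ are $Q$-orthogonal. *)

(* Defs.v *)
From HB Require Import structures.
From mathcomp Require Import all_boot all_algebra.
Set Implicit Arguments. Unset Strict Implicit. Unset Printing Implicit Defensive.
Import GRing.Theory.
Local Open Scope ring_scope.

Section QuadDefs.
Variable K : fieldType.

(* A line of K^2 with normalized equation  t X - u Y + v = 0 :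
   LVert v   : (t,u,v) = (1,0,v)   (the case u = 0, t = 1)
   LSlope t v: (t,u,v) = (t,1,v)   (the case u = 1)            *)
Inductive line := LVert (v : K) | LSlope (t v : K).

Definition tL (l : line) : K := match l with LVert _ => 1 | LSlope t _ => t end.
Definition uL (l : line) : K := match l with LVert _ => 0 | LSlope _ _ => 1 end.
Definition vL (l : line) : K := match l with LVert v => v | LSlope _ v => v end.

Definition point := (K * K)%type.

Definition on_line (l : line) (p : point) : Prop :=
  tL l * p.1 - uL l * p.2 + vL l = 0.

Definition parallel (l1 l2 : line) : bool := tL l1 * uL l2 == tL l2 * uL l1.

(* intersection point of two non-parallel lines (Cramer's rule) *)
Definition meet (l1 l2 : line) : point :=
  let d := uL l1 * tL l2 - tL l1 * uL l2 in
  ((vL l1 * uL l2 - uL l1 * vL l2) / d, (tL l2 * vL l1 - tL l1 * vL l2) / d).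

(* points of the projective closure: finite points and points at infinity,
   the latter given by a normalized direction (u,t) of a line *)
Inductive ppoint := PFin (p : point) | PInf (d : K * K).

Definition pt_inf (l : line) : ppoint := PInf (uL l, tL l).

Definition avg2 (p q : point) : point := ((p.1 + q.1) / 2, (p.2 + q.2) / 2).

Definition crosses (l l1 l2 : line) : Prop :=
  l <> l1 /\ l <> l2 /\ ~ (parallel l l1 /\ parallel l l2).

(* mid_{l1,l2}(l) (meaningful when l crosses {l1,l2}) *)
Definition mid (l1 l2 l : line) : ppoint :=
  if parallel l l1 || parallel l l2 then pt_inf l
  else PFin (avg2 (meet l l1) (meet l l2)).

Definition is_quad (A B A' B' : line) : Prop :=
  [/\ (A <> B /\ A <> A' /\ A <> B' /\ B <> A' /\ B <> B' /\ A' <> B'),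
      ~ (exists p, [/\ on_line A p, on_line B p, on_line A' p & on_line B' p]),
      ~~ parallel A B, ~~ parallel B A' & ~~ parallel A' B' /\ ~~ parallel B' A].

Definition centroid (A B A' B' : line) : point :=
  let p1 := meet A B in let p2 := meet B A' in
  let p3 := meet A' B' in let p4 := meet B' A in
  ((p1.1 + p2.1 + p3.1 + p4.1) / 4, (p1.2 + p2.2 + p3.2 + p4.2) / 4).

Definition bisector (A B A' B' l : line) : Prop :=
  crosses l A A' -> crosses l B B' -> mid A A' l = mid B B' l.

Definition bis_midpoint (A B A' B' l : line) (m : ppoint) : Prop :=
  [/\ crosses l A A' \/ crosses l B B',
      crosses l A A' -> mid A A' l = m
    & crosses l B B' -> mid B B' l = m].

Definition qalpha (A B A' B' : line) : K :=
  tL A * uL B * uL A' * uL B' - uL A * tL B * uL A' * uL B'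
  + uL A * uL B * tL A' * uL B' - uL A * uL B * uL A' * tL B'.
Definition qbeta (A B A' B' : line) : K :=
  tL A * uL B * tL A' * uL B' - uL A * tL B * uL A' * tL B'.
Definition qgamma (A B A' B' : line) : K :=
  tL A * tL B * tL A' * uL B' - tL A * tL B * uL A' * tL B'
  + tL A * uL B * tL A' * tL B' - uL A * tL B * tL A' * tL B'.

Definition qform (A B A' B' : line) (v w : K * K) : K :=
  let a := qalpha A B A' B' in let b := qbeta A B A' B' in
  let c := qgamma A B A' B' in
  v.1 * (c * w.1 - b * w.2) + v.2 * (- b * w.1 + a * w.2).

Definition q_orthogonal (A B A' B' l1 l2 : line) : Prop :=
  qform A B A' B' (uL l1, tL l1) (uL l2, tL l2) = 0.

(* {l1,l2} is a Q-pair: both bisectors, the midpoint of their midpoints is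
   the centroid (this forces both midpoints to be finite), Q-orthogonal *)
Definition Q_pair (A B A' B' l1 l2 : line) : Prop :=
  [/\ bisector A B A' B' l1, bisector A B A' B' l2,
      exists p1 p2 : point,
        [/\ bis_midpoint A B A' B' l1 (PFin p1),
            bis_midpoint A B A' B' l2 (PFin p2)
          & avg2 p1 p2 = centroid A B A' B']
    & q_orthogonal A B A' B' l1 l2].

End QuadDefs.

(* Main.v *)
Require Import Defs.
From mathcomp Require Import all_boot all_algebra.
Local Open Scope ring_scope.
From HB Require Import structures.
From mathcomp Require Import ring.
From Stdlib Require Import Classical.
Set Implicit Arguments. Unset Strict Implicit. Unset Printing Implicit Defensive.
Import GRing.Theory.
Local Open Scope ring_scope.

Definition lv {K : fieldType} (l : line K) (p : point K) := tL l * p.1 - uL l * p.2 + vL l.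
Definition ecov {K : fieldType} (X Y : line K) (p : point K) : K * K :=
  (lv X p * tL Y + lv Y p * tL X, - (lv X p * uL Y + lv Y p * uL X)).
Definition dotv {K : fieldType} (a b : K * K) := a.1 * b.1 + a.2 * b.2.
Definition detv {K : fieldType} (a b : K * K) := a.1 * b.2 - a.2 * b.1.
Definition bvec {K : fieldType} (A B A' B' : line K) (d : K * K) : K * K :=
  (qgamma A B A' B' * d.1 - qbeta A B A' B' * d.2,
   - qbeta A B A' B' * d.1 + qalpha A B A' B' * d.2).
Definition den {K : fieldType} (X Y : line K) := uL X * tL Y - tL X * uL Y.
Definition M2of {K : fieldType} (A B A' B' : line K) (M : point K) : point K :=
  (2 * (centroid A B A' B').1 - M.1, 2 * (centroid A B A' B').2 - M.2).
Definition dirl {K : fieldType} (l : line K) : K * K := (uL l, tL l).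
Definition c1 {K : fieldType} (A B A' B' : line K) : K := ((tL A)^+3*(tL B)^+2*(uL B)*(tL A')*(uL A')^+2*(uL B')^+3 - (tL A)^+3*(tL B)^+2*(uL B)*(uL A')^+3*(tL B')*(uL B')^+2 - 3%:R*(tL A)^+3*(tL B)*(uL B)^+2*(tL A')^+2*(uL A')*(uL B')^+3 + 4%:R*(tL A)^+3*(tL B)*(uL B)^+2*(tL A')*(uL A')^+2*(tL B')*(uL B')^+2 - (tL A)^+3*(tL B)*(uL B)^+2*(uL A')^+3*(tL B')^+2*(uL B') + 2%:R*(tL A)^+3*(uL B)^+3*(tL A')^+3*(uL B')^+3 - 3%:R*(tL A)^+3*(uL B)^+3*(tL A')^+2*(uL A')*(tL B')*(uL B')^+2 + (tL A)^+3*(uL B)^+3*(tL A')*(uL A')^+2*(tL B')^+2*(uL B') - (tL A)^+2*(uL A)*(tL B)^+3*(tL A')*(uL A')^+2*(uL B')^+3 + (tL A)^+2*(uL A)*(tL B)^+3*(uL A')^+3*(tL B')*(uL B')^+2 + 4%:R*(tL A)^+2*(uL A)*(tL B)^+2*(uL B)*(tL A')^+2*(uL A')*(uL B')^+3 - 8%:R*(tL A)^+2*(uL A)*(tL B)^+2*(uL B)*(tL A')*(uL A')^+2*(tL B')*(uL B')^+2 + 4%:R*(tL A)^+2*(uL A)*(tL B)^+2*(uL B)*(uL A')^+3*(tL B')^+2*(uL B') - 3%:R*(tL A)^+2*(uL A)*(tL B)*(uL B)^+2*(tL A')^+3*(uL B')^+3 + 10%:R*(tL A)^+2*(uL A)*(tL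 B)*(uL B)^+2*(tL A')^+2*(uL A')*(tL B')*(uL B')^+2 - 8%:R*(tL A)^+2*(uL A)*(tL B)*(uL B)^+2*(tL A')*(uL A')^+2*(tL B')^+2*(uL B') + (tL A)^+2*(uL A)*(tL B)*(uL B)^+2*(uL A')^+3*(tL B')^+3 - 3%:R*(tL A)^+2*(uL A)*(uL B)^+3*(tL A')^+3*(tL B')*(uL B')^+2 + 4%:R*(tL A)^+2*(uL A)*(uL B)^+3*(tL A')^+2*(uL A')*(tL B')^+2*(uL B') - (tL A)^+2*(uL A)*(uL B)^+3*(tL A')*(uL A')^+2*(tL B')^+3 - (tL A)*(uL A)^+2*(tL B)^+3*(tL A')^+2*(uL A')*(uL B')^+3 + 4%:R*(tL A)*(uL A)^+2*(tL B)^+3*(tL A')*(uL A')^+2*(tL B')*(uL B')^+2 - 3%:R*(tL A)*(uL A)^+2*(tL B)^+3*(uL A')^+3*(tL B')^+2*(uL B') + (tL A)*(uL A)^+2*(tL B)^+2*(uL B)*(tL A')^+3*(uL B')^+3 - 8%:R*(tL A)*(uL A)^+2*(tL B)^+2*(uL B)*(tL A')^+2*(uL A')*(tL B')*(uL B')^+2 + 10%:R*(tL A)*(uL A)^+2*(tL B)^+2*(uL B)*(tL A')*(uL A')^+2*(tL B')^+2*(uL B') - 3%:R*(tL A)*(uL A)^+2*(tL B)^+2*(uL B)*(uL A')^+3*(tL B')^+3 + 4%:R*(tL A)*(uL A)^+2*(tL B)*(uL B)^+2*(tL A')^+3*(tL B')*(uL B')^+2 - 8%:R*(tL A)*(uL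 A)^+2*(tL B)*(uL B)^+2*(tL A')^+2*(uL A')*(tL B')^+2*(uL B') + 4%:R*(tL A)*(uL A)^+2*(tL B)*(uL B)^+2*(tL A')*(uL A')^+2*(tL B')^+3 + (tL A)*(uL A)^+2*(uL B)^+3*(tL A')^+3*(tL B')^+2*(uL B') - (tL A)*(uL A)^+2*(uL B)^+3*(tL A')^+2*(uL A')*(tL B')^+3 + (uL A)^+3*(tL B)^+3*(tL A')^+2*(uL A')*(tL B')*(uL B')^+2 - 3%:R*(uL A)^+3*(tL B)^+3*(tL A')*(uL A')^+2*(tL B')^+2*(uL B') + 2%:R*(uL A)^+3*(tL B)^+3*(uL A')^+3*(tL B')^+3 - (uL A)^+3*(tL B)^+2*(uL B)*(tL A')^+3*(tL B')*(uL B')^+2 + 4%:R*(uL A)^+3*(tL B)^+2*(uL B)*(tL A')^+2*(uL A')*(tL B')^+2*(uL B') - 3%:R*(uL A)^+3*(tL B)^+2*(uL B)*(tL A')*(uL A')^+2*(tL B')^+3 - (uL A)^+3*(tL B)*(uL B)^+2*(tL A')^+3*(tL B')^+2*(uL B') + (uL A)^+3*(tL B)*(uL B)^+2*(tL A')^+2*(uL A')*(tL B')^+3).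
Definition c2 {K : fieldType} (A B A' B' : line K) : K := (- (tL A)^+4*(tL B)*(uL B)*(tL A')*(uL A')^+3*(uL B')^+2 + (tL A)^+4*(tL B)*(uL B)*(uL A')^+4*(tL B')*(uL B') + (tL A)^+4*(uL B)^+2*(tL A')^+2*(uL A')^+2*(uL B')^+2 - (tL A)^+4*(uL B)^+2*(tL A')*(uL A')^+3*(tL B')*(uL B') + (tL A)^+3*(uL A)*(tL B)^+2*(tL A')*(uL A')^+3*(uL B')^+2 - (tL A)^+3*(uL A)*(tL B)^+2*(uL A')^+4*(tL B')*(uL B') + (tL A)^+3*(uL A)*(tL B)*(uL B)*(tL A')^+2*(uL A')^+2*(uL B')^+2 - (tL A)^+3*(uL A)*(tL B)*(uL B)*(uL A')^+4*(tL B')^+2 - 2%:R*(tL A)^+3*(uL A)*(uL B)^+2*(tL A')^+3*(uL A')*(uL B')^+2 + (tL A)^+3*(uL A)*(uL B)^+2*(tL A')^+2*(uL A')^+2*(tL B')*(uL B') + (tL A)^+3*(uL A)*(uL B)^+2*(tL A')*(uL A')^+3*(tL B')^+2 - 2%:R*(tL A)^+2*(uL A)^+2*(tL B)^+2*(tL A')^+2*(uL A')^+2*(uL B')^+2 + (tL A)^+2*(uL A)^+2*(tL B)^+2*(tL A')*(uL A')^+3*(tL B')*(uL B') + (tL A)^+2*(uL A)^+2*(tL B)^+2*(uL A')^+4*(tL B')^+2 + (tL A)^+2*(uL A)^+2*(tL B)*(uL B)*(tL A')^+3*(uL A')*(uL B')^+2 - 2%:R*(tL A)^+2*(uL A)^+2*(tL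 B)*(uL B)*(tL A')^+2*(uL A')^+2*(tL B')*(uL B') + (tL A)^+2*(uL A)^+2*(tL B)*(uL B)*(tL A')*(uL A')^+3*(tL B')^+2 + (tL A)^+2*(uL A)^+2*(uL B)^+2*(tL A')^+4*(uL B')^+2 + (tL A)^+2*(uL A)^+2*(uL B)^+2*(tL A')^+3*(uL A')*(tL B')*(uL B') - 2%:R*(tL A)^+2*(uL A)^+2*(uL B)^+2*(tL A')^+2*(uL A')^+2*(tL B')^+2 + (tL A)*(uL A)^+3*(tL B)^+2*(tL A')^+3*(uL A')*(uL B')^+2 + (tL A)*(uL A)^+3*(tL B)^+2*(tL A')^+2*(uL A')^+2*(tL B')*(uL B') - 2%:R*(tL A)*(uL A)^+3*(tL B)^+2*(tL A')*(uL A')^+3*(tL B')^+2 - (tL A)*(uL A)^+3*(tL B)*(uL B)*(tL A')^+4*(uL B')^+2 + (tL A)*(uL A)^+3*(tL B)*(uL B)*(tL A')^+2*(uL A')^+2*(tL B')^+2 - (tL A)*(uL A)^+3*(uL B)^+2*(tL A')^+4*(tL B')*(uL B') + (tL A)*(uL A)^+3*(uL B)^+2*(tL A')^+3*(uL A')*(tL B')^+2 - (uL A)^+4*(tL B)^+2*(tL A')^+3*(uL A')*(tL B')*(uL B') + (uL A)^+4*(tL B)^+2*(tL A')^+2*(uL A')^+2*(tL B')^+2 + (uL A)^+4*(tL B)*(uL B)*(tL A')^+4*(tL B')*(uL B') - (uL A)^+4*(tL B)*(uL B)*(tL A')^+3*(uL A')*(tL B')^+2).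
Definition c3 {K : fieldType} (A B A' B' : line K) : K := ((tL A)^+2*(tL B)^+3*(uL B)*(tL A')*(uL A')*(uL B')^+4 - (tL A)^+2*(tL B)^+3*(uL B)*(uL A')^+2*(tL B')*(uL B')^+3 - (tL A)^+2*(tL B)^+2*(uL B)^+2*(tL A')^+2*(uL B')^+4 - (tL A)^+2*(tL B)^+2*(uL B)^+2*(tL A')*(uL A')*(tL B')*(uL B')^+3 + 2%:R*(tL A)^+2*(tL B)^+2*(uL B)^+2*(uL A')^+2*(tL B')^+2*(uL B')^+2 + 2%:R*(tL A)^+2*(tL B)*(uL B)^+3*(tL A')^+2*(tL B')*(uL B')^+3 - (tL A)^+2*(tL B)*(uL B)^+3*(tL A')*(uL A')*(tL B')^+2*(uL B')^+2 - (tL A)^+2*(tL B)*(uL B)^+3*(uL A')^+2*(tL B')^+3*(uL B') - (tL A)^+2*(uL B)^+4*(tL A')^+2*(tL B')^+2*(uL B')^+2 + (tL A)^+2*(uL B)^+4*(tL A')*(uL A')*(tL B')^+3*(uL B') - (tL A)*(uL A)*(tL B)^+4*(tL A')*(uL A')*(uL B')^+4 + (tL A)*(uL A)*(tL B)^+4*(uL A')^+2*(tL B')*(uL B')^+3 + (tL A)*(uL A)*(tL B)^+3*(uL B)*(tL A')^+2*(uL B')^+4 - (tL A)*(uL A)*(tL B)^+3*(uL B)*(uL A')^+2*(tL B')^+2*(uL B')^+2 - (tL A)*(uL A)*(tL B)^+2*(uL B)^+2*(tL A')^+2*(tL B')*(uL B')^+3 + 2%:R*(tL A)*(uL A)*(tL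 B)^+2*(uL B)^+2*(tL A')*(uL A')*(tL B')^+2*(uL B')^+2 - (tL A)*(uL A)*(tL B)^+2*(uL B)^+2*(uL A')^+2*(tL B')^+3*(uL B') - (tL A)*(uL A)*(tL B)*(uL B)^+3*(tL A')^+2*(tL B')^+2*(uL B')^+2 + (tL A)*(uL A)*(tL B)*(uL B)^+3*(uL A')^+2*(tL B')^+4 + (tL A)*(uL A)*(uL B)^+4*(tL A')^+2*(tL B')^+3*(uL B') - (tL A)*(uL A)*(uL B)^+4*(tL A')*(uL A')*(tL B')^+4 + (uL A)^+2*(tL B)^+4*(tL A')*(uL A')*(tL B')*(uL B')^+3 - (uL A)^+2*(tL B)^+4*(uL A')^+2*(tL B')^+2*(uL B')^+2 - (uL A)^+2*(tL B)^+3*(uL B)*(tL A')^+2*(tL B')*(uL B')^+3 - (uL A)^+2*(tL B)^+3*(uL B)*(tL A')*(uL A')*(tL B')^+2*(uL B')^+2 + 2%:R*(uL A)^+2*(tL B)^+3*(uL B)*(uL A')^+2*(tL B')^+3*(uL B') + 2%:R*(uL A)^+2*(tL B)^+2*(uL B)^+2*(tL A')^+2*(tL B')^+2*(uL B')^+2 - (uL A)^+2*(tL B)^+2*(uL B)^+2*(tL A')*(uL A')*(tL B')^+3*(uL B') - (uL A)^+2*(tL B)^+2*(uL B)^+2*(uL A')^+2*(tL B')^+4 - (uL A)^+2*(tL B)*(uL B)^+3*(tL A')^+2*(tL B')^+3*(uL B') + (uL A)^+2*(tL B)*(uL B)^+3*(tL A')*(uL A')*(tL B')^+4).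
Definition c4 {K : fieldType} (A B A' B' : line K) : K := (- (tL A)^+3*(tL B)^+2*(uL B)*(tL A')*(uL A')^+2*(uL B')^+3 + (tL A)^+3*(tL B)^+2*(uL B)*(uL A')^+3*(tL B')*(uL B')^+2 + 3%:R*(tL A)^+3*(tL B)*(uL B)^+2*(tL A')^+2*(uL A')*(uL B')^+3 - 4%:R*(tL A)^+3*(tL B)*(uL B)^+2*(tL A')*(uL A')^+2*(tL B')*(uL B')^+2 + (tL A)^+3*(tL B)*(uL B)^+2*(uL A')^+3*(tL B')^+2*(uL B') - 2%:R*(tL A)^+3*(uL B)^+3*(tL A')^+3*(uL B')^+3 + 3%:R*(tL A)^+3*(uL B)^+3*(tL A')^+2*(uL A')*(tL B')*(uL B')^+2 - (tL A)^+3*(uL B)^+3*(tL A')*(uL A')^+2*(tL B')^+2*(uL B') + (tL A)^+2*(uL A)*(tL B)^+3*(tL A')*(uL A')^+2*(uL B')^+3 - (tL A)^+2*(uL A)*(tL B)^+3*(uL A')^+3*(tL B')*(uL B')^+2 - 4%:R*(tL A)^+2*(uL A)*(tL B)^+2*(uL B)*(tL A')^+2*(uL A')*(uL B')^+3 + 8%:R*(tL A)^+2*(uL A)*(tL B)^+2*(uL B)*(tL A')*(uL A')^+2*(tL B')*(uL B')^+2 - 4%:R*(tL A)^+2*(uL A)*(tL B)^+2*(uL B)*(uL A')^+3*(tL B')^+2*(uL B') + 3%:R*(tL A)^+2*(uL A)*(tL B)*(uL B)^+2*(tL A')^+3*(uL B')^+3 - 10%:R*(tL A)^+2*(uL A)*(tL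 B)*(uL B)^+2*(tL A')^+2*(uL A')*(tL B')*(uL B')^+2 + 8%:R*(tL A)^+2*(uL A)*(tL B)*(uL B)^+2*(tL A')*(uL A')^+2*(tL B')^+2*(uL B') - (tL A)^+2*(uL A)*(tL B)*(uL B)^+2*(uL A')^+3*(tL B')^+3 + 3%:R*(tL A)^+2*(uL A)*(uL B)^+3*(tL A')^+3*(tL B')*(uL B')^+2 - 4%:R*(tL A)^+2*(uL A)*(uL B)^+3*(tL A')^+2*(uL A')*(tL B')^+2*(uL B') + (tL A)^+2*(uL A)*(uL B)^+3*(tL A')*(uL A')^+2*(tL B')^+3 + (tL A)*(uL A)^+2*(tL B)^+3*(tL A')^+2*(uL A')*(uL B')^+3 - 4%:R*(tL A)*(uL A)^+2*(tL B)^+3*(tL A')*(uL A')^+2*(tL B')*(uL B')^+2 + 3%:R*(tL A)*(uL A)^+2*(tL B)^+3*(uL A')^+3*(tL B')^+2*(uL B') - (tL A)*(uL A)^+2*(tL B)^+2*(uL B)*(tL A')^+3*(uL B')^+3 + 8%:R*(tL A)*(uL A)^+2*(tL B)^+2*(uL B)*(tL A')^+2*(uL A')*(tL B')*(uL B')^+2 - 10%:R*(tL A)*(uL A)^+2*(tL B)^+2*(uL B)*(tL A')*(uL A')^+2*(tL B')^+2*(uL B') + 3%:R*(tL A)*(uL A)^+2*(tL B)^+2*(uL B)*(uL A')^+3*(tL B')^+3 - 4%:R*(tL A)*(uL A)^+2*(tL B)*(uL B)^+2*(tL A')^+3*(tL B')*(uL B')^+2 + 8%:R*(tL A)*(uL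 A)^+2*(tL B)*(uL B)^+2*(tL A')^+2*(uL A')*(tL B')^+2*(uL B') - 4%:R*(tL A)*(uL A)^+2*(tL B)*(uL B)^+2*(tL A')*(uL A')^+2*(tL B')^+3 - (tL A)*(uL A)^+2*(uL B)^+3*(tL A')^+3*(tL B')^+2*(uL B') + (tL A)*(uL A)^+2*(uL B)^+3*(tL A')^+2*(uL A')*(tL B')^+3 - (uL A)^+3*(tL B)^+3*(tL A')^+2*(uL A')*(tL B')*(uL B')^+2 + 3%:R*(uL A)^+3*(tL B)^+3*(tL A')*(uL A')^+2*(tL B')^+2*(uL B') - 2%:R*(uL A)^+3*(tL B)^+3*(uL A')^+3*(tL B')^+3 + (uL A)^+3*(tL B)^+2*(uL B)*(tL A')^+3*(tL B')*(uL B')^+2 - 4%:R*(uL A)^+3*(tL B)^+2*(uL B)*(tL A')^+2*(uL A')*(tL B')^+2*(uL B') + 3%:R*(uL A)^+3*(tL B)^+2*(uL B)*(tL A')*(uL A')^+2*(tL B')^+3 + (uL A)^+3*(tL B)*(uL B)^+2*(tL A')^+3*(tL B')^+2*(uL B') - (uL A)^+3*(tL B)*(uL B)^+2*(tL A')^+2*(uL A')*(tL B')^+3).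

Lemma key1 {K : fieldType} (h2 : (2:K) != 0) (A B A' B' : line K) (M d : point K) :
  den A B != 0 -> den B A' != 0 -> den A' B' != 0 -> den B' A != 0 ->
  detv (ecov A A' (M2of A B A' B' M)) (bvec A B A' B' d)
    * (den A B * den B A' * den A' B' * den B' A) * 2
  = c1 A B A' B' * dotv (ecov A A' M) d + c2 A B A' B' * dotv (ecov B B' M) d.
Proof.
move=> d1 d2 d3 d4.
rewrite /den /detv /ecov /M2of /centroid /meet /lv /bvec /dotv /qalpha /qbeta /qgamma /c1 /c2.
rewrite /den in d1 d2 d3 d4.
have h4 : (4:K) != 0 by rewrite (_ : 4 = 2 * 2) ?mulf_neq0 //; ring.
rewrite /=.
field.
by rewrite ?h4 ?d1 ?d2 ?d3 ?d4.
Qed.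

Lemma key2 {K : fieldType} (h2 : (2:K) != 0) (A B A' B' : line K) (M d : point K) :
  den A B != 0 -> den B A' != 0 -> den A' B' != 0 -> den B' A != 0 ->
  detv (ecov B B' (M2of A B A' B' M)) (bvec A B A' B' d)
    * (den A B * den B A' * den A' B' * den B' A) * 2
  = c3 A B A' B' * dotv (ecov A A' M) d + c4 A B A' B' * dotv (ecov B B' M) d.
Proof.
move=> d1 d2 d3 d4.
rewrite /den /detv /ecov /M2of /centroid /meet /lv /bvec /dotv /qalpha /qbeta /qgamma /c3 /c4.
rewrite /den in d1 d2 d3 d4.
have h4 : (4:K) != 0 by rewrite (_ : 4 = 2 * 2) ?mulf_neq0 //; ring.
rewrite /=.
field.
by rewrite ?h4 ?d1 ?d2 ?d3 ?d4.
Qed.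

Lemma line_eq {K : fieldType} (l1 l2 : line K) :
  tL l1 = tL l2 -> uL l1 = uL l2 -> vL l1 = vL l2 -> l1 = l2.
Proof.
case: l1 => [v1|t1 v1]; case: l2 => [v2|t2 v2] /= ht hu hv.
- by rewrite hv.
- by move: hu => /eqP; rewrite eq_sym oner_eq0.
- by move: hu => /eqP; rewrite oner_eq0.
- by rewrite ht hv.
Qed.

Lemma par_eq {K : fieldType} (l1 l2 : line K) :
  parallel l1 l2 -> tL l1 = tL l2 /\ uL l1 = uL l2.
Proof.
rewrite /parallel; case: l1 => [v1|t1 v1]; case: l2 => [v2|t2 v2] /=.
- by [].
- by rewrite mulr1 mulr0 oner_eq0.
- by rewrite mulr1 mulr0 eq_sym oner_eq0.
- by rewrite !mulr1 => /eqP ->.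
Qed.

Lemma eq_par {K : fieldType} (l1 l2 : line K) :
  tL l1 = tL l2 -> uL l1 = uL l2 -> parallel l1 l2.
Proof. by rewrite /parallel => -> ->; rewrite mulrC. Qed.

Lemma par_refl {K : fieldType} (l : line K) : parallel l l.
Proof. exact: eq_par. Qed.

Lemma par_sym {K : fieldType} (l1 l2 : line K) : parallel l1 l2 -> parallel l2 l1.
Proof. by case/par_eq=> h1 h2; apply: eq_par. Qed.

Lemma par_trans {K : fieldType} (l1 l2 l3 : line K) :
  parallel l1 l2 -> parallel l2 l3 -> parallel l1 l3.
Proof.
by case/par_eq=> h1 h2; case/par_eq=> h3 h4; apply: eq_par; [rewrite h1 | rewrite h2].
Qed.

Lemma den_ne {K : fieldType} (X Y : line K) : ~~ parallel X Y -> den X Y != 0.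
Proof.
rewrite /parallel /den => h; apply: contra h; rewrite subr_eq0 => /eqP e.
rewrite -subr_eq0; apply/eqP.
transitivity (- (uL X * tL Y - tL X * uL Y)); first by ring.
by rewrite e subrr oppr0.
Qed.


Lemma npar_sym {K : fieldType} (X Y : line K) : ~~ parallel X Y -> ~~ parallel Y X.
Proof. by apply: contra; apply: par_sym. Qed.

Lemma dirl_nz {K : fieldType} (l : line K) : (dirl l).1 != 0 \/ (dirl l).2 != 0.
Proof. by case: l => [v|t v] /=; [right|left]; rewrite oner_eq0. Qed.

Lemma par_brk {K : fieldType} (l X : line K) :
  parallel l X -> tL X * uL l - uL X * tL l = 0.
Proof. by case/par_eq=> -> ->; ring. Qed.

Lemma npar_brk {K : fieldType} (l X : line K) :
  ~~ parallel l X -> tL X * uL l - uL X * tL l != 0.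
Proof.
move/den_ne; rewrite /den => h.
by rewrite (_ : tL X * uL l - uL X * tL l = uL l * tL X - tL l * uL X) //; ring.
Qed.

Lemma ecovE {K : fieldType} (X Y l : line K) (M : point K) :
  dotv (ecov X Y M) (dirl l) =
  lv X M * (tL Y * uL l - uL Y * tL l) + lv Y M * (tL X * uL l - uL X * tL l).
Proof. by rewrite /dotv /ecov /dirl /=; ring. Qed.

Lemma midE {K : fieldType} (hK : (2:K) != 0) (l X Y : line K) :
  ~~ parallel l X -> ~~ parallel l Y ->
  lv l (avg2 (meet l X) (meet l Y)) = 0 /\
  dotv (ecov X Y (avg2 (meet l X) (meet l Y))) (dirl l) = 0.
Proof.
move=> hX hY; have := den_ne hX; have := den_ne hY; rewrite /den => d2 d1.
rewrite /ecov /lv /dotv /avg2 /meet /dirl /=; split; field; by rewrite ?hK ?d1 ?d2.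
Qed.

Lemma par_pt {K : fieldType} (l X : line K) (M : point K) :
  parallel l X -> lv l M = 0 -> lv X M = 0 -> l = X.
Proof.
case/par_eq=> ht hu; rewrite /lv ht hu => e1 e2; apply: line_eq => //.
apply/eqP; rewrite -subr_eq0; apply/eqP.
transitivity ((tL X * M.1 - uL X * M.2 + vL l) - (tL X * M.1 - uL X * M.2 + vL X)).
  by ring.
by rewrite e1 e2 subrr.
Qed.

Lemma nocross {K : fieldType} (l X X' : line K) :
  ~ crosses l X X' -> parallel l X \/ parallel l X'.
Proof.
move=> nc; case: (classic (l = X)) => [->|nX]; first by left; exact: par_refl.
case: (classic (l = X')) => [->|nX']; first by right; exact: par_refl.
apply: NNPP => H; apply: nc; split=> //; split=> //.
by move=> [a b]; apply: H; left.
Qed.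

Lemma nocross_E {K : fieldType} (l X X' : line K) (M : point K) :
  ~ crosses l X X' -> lv l M = 0 -> dotv (ecov X X' M) (dirl l) = 0.
Proof.
move=> nc hM; rewrite ecovE.
case: (classic (l = X)) => [eX|nX].
  rewrite -eX hM (_ : tL l * uL l - uL l * tL l = 0); last by ring.
  by rewrite mul0r mulr0 addr0.
case: (classic (l = X')) => [eX|nX'].
  rewrite -eX hM (_ : tL l * uL l - uL l * tL l = 0); last by ring.
  by rewrite mul0r mulr0 addr0.
have [p1 p2] : parallel l X /\ parallel l X'.
  apply: NNPP => H; apply: nc; split=> //.
by rewrite (par_brk p1) (par_brk p2) !mulr0 addr0.
Qed.

Definition NP {K : fieldType} (X X' Y Y' : line K) :=
  [/\ ~~ parallel X Y, ~~ parallel X Y', ~~ parallel X' Y & ~~ parallel X' Y'].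

Lemma NP_sym {K : fieldType} (X X' Y Y' : line K) : NP X X' Y Y' -> NP Y Y' X X'.
Proof. by case=> a b c d; split; apply: npar_sym. Qed.

Lemma cross_of_par {K : fieldType} (X X' Y Y' l : line K) :
  NP X X' Y Y' -> parallel l X \/ parallel l X' ->
  [/\ crosses l Y Y', ~~ parallel l Y & ~~ parallel l Y'].
Proof.
case=> a b c d hp.
have nY : ~~ parallel l Y.
  apply/negP=> pY; case: hp => pX.
    by move/negP: a; apply; apply: par_trans (par_sym pX) pY.
  by move/negP: c; apply; apply: par_trans (par_sym pX) pY.
have nY' : ~~ parallel l Y'.
  apply/negP=> pY; case: hp => pX.
    by move/negP: b; apply; apply: par_trans (par_sym pX) pY.
  by move/negP: d; apply; apply: par_trans (par_sym pX) pY.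
split=> //; split.
- by move=> e; move/negP: nY; apply; rewrite e; apply: par_refl.
- split; first by move=> e; move/negP: nY'; apply; rewrite e; apply: par_refl.
  by move=> [pp _]; move/negP: nY; apply.
Qed.

Definition bmid {K : fieldType} (X X' Y Y' l : line K) (m : ppoint K) :=
  bis_midpoint X Y X' Y' l m.

Lemma bmid_sym {K : fieldType} (X X' Y Y' l : line K) m :
  bmid X X' Y Y' l m -> bmid Y Y' X X' l m.
Proof. by case=> [h1 h2 h3]; split=> //; case: h1; [right|left]. Qed.

Definition GoodM {K : fieldType} (X X' Y Y' l : line K) (M : point K) :=
  (lv l M = 0 /\ dotv (ecov X X' M) (dirl l) = 0 /\ dotv (ecov Y Y' M) (dirl l) = 0)
  /\ bmid X X' Y Y' l (PFin M).

Lemma GoodM_sym {K : fieldType} (X X' Y Y' l : line K) M :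
  GoodM X X' Y Y' l M -> GoodM Y Y' X X' l M.
Proof. by case=> [[a [b c]] d]; split; [|apply: bmid_sym]. Qed.

Lemma half {K : fieldType} (hK : (2:K) != 0) (X X' Y Y' l : line K) :
  NP X X' Y Y' -> ~ crosses l X X' -> exists M, GoodM X X' Y Y' l M.
Proof.
move=> np nc; have [cY nY nY'] := cross_of_par np (nocross nc).
have [h1 h2] := midE hK nY nY'.
exists (avg2 (meet l Y) (meet l Y')); split.
  split; first done.
  by split; [exact: nocross_E | done].
rewrite /bmid /bis_midpoint; split; [by right | by [] |].
by move=> _; rewrite /mid (negbTE nY) (negbTE nY').
Qed.

Lemma PQ_contra {K : fieldType} (X X' Y Y' l : line K) :
  NP X X' Y Y' -> parallel l X || parallel l X' -> parallel l Y || parallel l Y' -> False.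
Proof.
move=> np /orP hP /orP hQ; have [_ nY nY'] := cross_of_par np hP.
by case: hQ => h; [move/negP: nY | move/negP: nY'].
Qed.

Lemma char1 {K : fieldType} (hK : (2:K) != 0) (X X' Y Y' l : line K) :
  NP X X' Y Y' -> (crosses l X X' -> crosses l Y Y' -> mid X X' l = mid Y Y' l) ->
  exists M, GoodM X X' Y Y' l M.
Proof.
move=> np hb.
case: (classic (crosses l X X')) => cX; last exact: half.
case: (classic (crosses l Y Y')) => cY; last first.
  by have [M HM] := half hK (NP_sym np) cY; exists M; apply: GoodM_sym.
have e := hb cX cY; move: e; rewrite /mid.
case hP: (parallel l X || parallel l X'); case hQ: (parallel l Y || parallel l Y') => //.
- by move=> _; exfalso; apply: (PQ_contra np hP hQ).
move=> [e1 e2].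
have e : avg2 (meet l X) (meet l X') = avg2 (meet l Y) (meet l Y').
  by rewrite /avg2 e1 e2.
move/negbT: hP; rewrite negb_or => /andP [nX nX'].
move/negbT: hQ; rewrite negb_or => /andP [nY nY'].
have [h1 h2] := midE hK nX nX'; have [h3 h4] := midE hK nY nY'.
exists (avg2 (meet l X) (meet l X')); split.
  by split; [done | split; [done | rewrite e]].
rewrite /bmid /bis_midpoint; split; [by left | |].
  by move=> _; rewrite /mid (negbTE nX) (negbTE nX').
by move=> _; rewrite /mid (negbTE nY) (negbTE nY') e.
Qed.

Lemma lin2 {K : fieldType} (a b c e x y : K) :
  a * x + b * y = 0 -> c * x + e * y = 0 -> a * e - b * c != 0 -> x = 0 /\ y = 0.
Proof.
move=> h1 h2 hd.
have hx : (a * e - b * c) * x = 0.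
  by transitivity (e * (a * x + b * y) - b * (c * x + e * y)); [ring | rewrite h1 h2; ring].
have hy : (a * e - b * c) * y = 0.
  by transitivity (a * (c * x + e * y) - c * (a * x + b * y)); [ring | rewrite h1 h2; ring].
move/eqP: hx; rewrite mulf_eq0 (negbTE hd) /= => /eqP ->.
by move/eqP: hy; rewrite mulf_eq0 (negbTE hd) /= => /eqP ->.
Qed.

Lemma mid_uniq {K : fieldType} (hK : (2:K) != 0) (l X X' : line K) (M : point K) :
  ~~ parallel l X -> ~~ parallel l X' -> lv l M = 0 ->
  dotv (ecov X X' M) (dirl l) = 0 -> M = avg2 (meet l X) (meet l X').
Proof.
move=> nX nX' hl hE.
have [h1 h2] := midE hK nX nX'.
move: h1 h2; set P := avg2 _ _ => h1 h2.
have bX := npar_brk nX; have bX' := npar_brk nX'.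
set bx := tL X * uL l - uL X * tL l in bX; set bx' := tL X' * uL l - uL X' * tL l in bX'.
have [q1 q2] : M.1 - P.1 = 0 /\ M.2 - P.2 = 0.
  apply: (@lin2 K (tL l) (- uL l)
  (tL X * bx' + tL X' * bx) (- (uL X * bx' + uL X' * bx))).
- transitivity (lv l M - lv l P); first by rewrite /lv; ring.
  by rewrite hl h1 subrr.
- transitivity (dotv (ecov X X' M) (dirl l) - dotv (ecov X X' P) (dirl l)).
    by rewrite !ecovE /lv /bx /bx'; ring.
  by rewrite hE h2 subrr.
- rewrite (_ : _ - _ = 2 * bx * bx'); last by rewrite /bx /bx'; ring.
  by rewrite !mulf_neq0.
move/eqP: q1; rewrite subr_eq0 => /eqP q1; move/eqP: q2; rewrite subr_eq0 => /eqP q2.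
by rewrite [M]surjective_pairing [P]surjective_pairing q1 q2.
Qed.

Lemma pairinfo {K : fieldType} (hK : (2:K) != 0) (l X X' : line K) (M : point K) :
  lv l M = 0 -> dotv (ecov X X' M) (dirl l) = 0 ->
  (crosses l X X' /\ mid X X' l = PFin M) \/
  ((parallel l X || parallel l X') /\ ~ crosses l X X').
Proof.
move=> hl hE.
have ncr : parallel l X -> parallel l X' -> ~ crosses l X X'.
  by move=> p1 p2 [_ [_ h]]; apply: h.
case pX: (parallel l X); case pX': (parallel l X').
- by right; split => //; apply: ncr.
- right; split => //.
  move: hE; rewrite ecovE (par_brk pX) mulr0 addr0 => /eqP.
  rewrite mulf_eq0 (negbTE (npar_brk (negbT pX'))) orbF => /eqP hX.
  by rewrite (par_pt pX hl hX) => -[h _]; apply: h.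
- right; split => //.
  move: hE; rewrite ecovE (par_brk pX') mulr0 add0r => /eqP.
  rewrite mulf_eq0 (negbTE (npar_brk (negbT pX))) orbF => /eqP hX.
  by rewrite (par_pt pX' hl hX) => -[_ [h _]]; apply: h.
- left; split.
    split; first by move=> e; move: pX; rewrite e par_refl.
    split; first by move=> e; move: pX'; rewrite e par_refl.
    by move=> [h _]; move: pX; rewrite h.
  rewrite /mid pX pX' /=; congr PFin; symmetry.
  by apply: mid_uniq => //; rewrite ?pX ?pX'.
Qed.

Lemma char2 {K : fieldType} (hK : (2:K) != 0) (X X' Y Y' l : line K) (M : point K) :
  NP X X' Y Y' -> lv l M = 0 -> dotv (ecov X X' M) (dirl l) = 0 ->
  dotv (ecov Y Y' M) (dirl l) = 0 ->
  (crosses l X X' -> crosses l Y Y' -> mid X X' l = mid Y Y' l) /\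
  bmid X X' Y Y' l (PFin M).
Proof.
move=> np hl hX hY.
case: (pairinfo hK hl hX) => [[cX mX]|[pX ncX]];
case: (pairinfo hK hl hY) => [[cY mY]|[pY ncY]].
- split; first by rewrite mX mY.
  by rewrite /bmid /bis_midpoint; split; [left | |].
- split; first by move=> _ h; exfalso; apply: ncY.
  by rewrite /bmid /bis_midpoint; split; [left | | move=> h; exfalso; apply: ncY].
- split; first by move=> h; exfalso; apply: ncX.
  by rewrite /bmid /bis_midpoint; split; [right | move=> h; exfalso; apply: ncX |].
- by exfalso; apply: (PQ_contra np pX pY).
Qed.

Lemma bmid_on {K : fieldType} (hK : (2:K) != 0) (X X' Y Y' l : line K) (p : point K) :
  bmid X X' Y Y' l (PFin p) -> lv l p = 0.
Proof.
have H : forall Z Z', mid Z Z' l = PFin p -> lv l p = 0.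
  move=> Z Z'; rewrite /mid; case hP: (parallel l Z || parallel l Z') => // -[<-].
  move/negbT: hP; rewrite negb_or => /andP [n1 n2].
  by have [] := midE hK n1 n2.
by case=> [[c|c] h1 h2]; [apply: (H X X'); apply: h1 | apply: (H Y Y'); apply: h2].
Qed.

Lemma bmid_uniq {K : fieldType} (X X' Y Y' l : line K) (p q : point K) :
  bmid X X' Y Y' l (PFin p) -> bmid X X' Y Y' l (PFin q) -> p = q.
Proof.
case=> [[c|c] h1 h2] [_ h3 h4].
- by move: (h1 c); rewrite (h3 c) => -[].
- by move: (h2 c); rewrite (h4 c) => -[].
Qed.

Lemma cr_ne {K : fieldType} (X Y : line K) : ~~ parallel X Y -> tL X * uL Y - uL X * tL Y != 0.
Proof.
move=> h; apply: contra h; rewrite subr_eq0 => /eqP e.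
by rewrite /parallel e mulrC.
Qed.

Lemma bvec_nz {K : fieldType} (A B A' B' : line K) (d : K * K) :
  ~~ parallel A B -> ~~ parallel B A' -> ~~ parallel A' B' -> ~~ parallel B' A ->
  d.1 != 0 \/ d.2 != 0 ->
  (bvec A B A' B' d).1 != 0 \/ (bvec A B A' B' d).2 != 0.
Proof.
move=> p1 p2 p3 p4 hd.
have hD : qalpha A B A' B' * qgamma A B A' B' - qbeta A B A' B' ^+ 2 != 0.
  rewrite (_ : _ - _ = - ((tL A * uL B - uL A * tL B) * (tL B * uL A' - uL B * tL A')
     * (tL A' * uL B' - uL A' * tL B') * (tL B' * uL A - uL B' * tL A))).
    by rewrite oppr_eq0 !mulf_neq0 // cr_ne.
  by rewrite /qalpha /qbeta /qgamma; ring.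
apply: NNPP => H.
have z1 : (bvec A B A' B' d).1 = 0 by apply: NNPP => h; apply: H; left; apply/eqP.
have z2 : (bvec A B A' B' d).2 = 0 by apply: NNPP => h; apply: H; right; apply/eqP.
move: z1 z2; rewrite /bvec /= => z1 z2.
have e1 : (qalpha A B A' B' * qgamma A B A' B' - qbeta A B A' B' ^+ 2) * d.1 = 0.
  transitivity (qalpha A B A' B' * (qgamma A B A' B' * d.1 - qbeta A B A' B' * d.2)
    + qbeta A B A' B' * (- qbeta A B A' B' * d.1 + qalpha A B A' B' * d.2)); first by ring.
  by rewrite z1 z2; ring.
have e2 : (qalpha A B A' B' * qgamma A B A' B' - qbeta A B A' B' ^+ 2) * d.2 = 0.
  transitivity (qbeta A B A' B' * (qgamma A B A' B' * d.1 - qbeta A B A' B' * d.2)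
    + qgamma A B A' B' * (- qbeta A B A' B' * d.1 + qalpha A B A' B' * d.2)); first by ring.
  by rewrite z1 z2; ring.
move/eqP: e1; rewrite mulf_eq0 (negbTE hD) /= => /eqP e1.
move/eqP: e2; rewrite mulf_eq0 (negbTE hD) /= => /eqP e2.
by case: hd; rewrite ?e1 ?e2 eqxx.
Qed.

Lemma perp_dot {K : fieldType} (e b w : K * K) :
  detv e b = 0 -> dotv b w = 0 -> b.1 != 0 \/ b.2 != 0 -> dotv e w = 0.
Proof.
move=> hd hb hnz.
have f1 : dotv e w * b.1 = 0.
  transitivity (dotv b w * e.1 - w.2 * detv e b); first by rewrite /dotv /detv; ring.
  by rewrite hb hd; ring.
have f2 : dotv e w * b.2 = 0.
  transitivity (dotv b w * e.2 + w.1 * detv e b); first by rewrite /dotv /detv; ring.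
  by rewrite hb hd; ring.
case: hnz => h.
  by move/eqP: f1; rewrite mulf_eq0 (negbTE h) orbF => /eqP.
by move/eqP: f2; rewrite mulf_eq0 (negbTE h) orbF => /eqP.
Qed.

Lemma dir_exists {K : fieldType} (b : K * K) (M : point K) :
  b.1 != 0 \/ b.2 != 0 -> exists l' : line K, dotv b (dirl l') = 0 /\ lv l' M = 0.
Proof.
move=> hb; case: (eqVneq b.2 0) => hb2.
  exists (LVert (- M.1)); rewrite /dotv /dirl /lv /= hb2; split; ring.
exists (LSlope (- b.1 / b.2) (- (- b.1 / b.2 * M.1 - M.2))); rewrite /dotv /dirl /lv /=.
by split; [field | ring].
Qed.

Lemma dir_unique {K : fieldType} (b : K * K) (M : point K) (l1 l2 : line K) :
  b.1 != 0 \/ b.2 != 0 -> dotv b (dirl l1) = 0 -> dotv b (dirl l2) = 0 ->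
  lv l1 M = 0 -> lv l2 M = 0 -> l1 = l2.
Proof.
move=> hb; rewrite /dotv /dirl /lv.
case: l1 => [v1|t1 v1]; case: l2 => [v2|t2 v2] /=.
- move=> _ _ e1 e2; congr LVert; apply/eqP; rewrite -subr_eq0; apply/eqP.
  by transitivity ((1 * M.1 - 0 * M.2 + v1) - (1 * M.1 - 0 * M.2 + v2)); [ring | rewrite e1 e2 subrr].
- move=> e1 e2 _ _; exfalso.
  have z2 : b.2 = 0 by rewrite -e1; ring.
  have z1 : b.1 = 0 by rewrite -e2 z2; ring.
  by case: hb; rewrite ?z1 ?z2 eqxx.
- move=> e1 e2 _ _; exfalso.
  have z2 : b.2 = 0 by rewrite -e2; ring.
  have z1 : b.1 = 0 by rewrite -e1 z2; ring.
  by case: hb; rewrite ?z1 ?z2 eqxx.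
- move=> e1 e2 f1 f2.
  have et : t1 = t2.
    have h : b.2 * (t1 - t2) = 0 by transitivity ((b.1 * 1 + b.2 * t1) - (b.1 * 1 + b.2 * t2)); [ring | rewrite e1 e2 subrr].
    case: (eqVneq b.2 0) => hb2.
      exfalso; have z1 : b.1 = 0 by rewrite -e1 hb2; ring.
      by case: hb; rewrite ?z1 ?hb2 eqxx.
    move/eqP: h; rewrite mulf_eq0 (negbTE hb2) /= subr_eq0 => /eqP //.
  rewrite -et; congr LSlope; apply/eqP; rewrite -subr_eq0; apply/eqP.
  rewrite -et in f2.
  by transitivity ((t1 * M.1 - 1 * M.2 + v1) - (t1 * M.1 - 1 * M.2 + v2)); [ring | rewrite f1 f2 subrr].
Qed.

Lemma qformE {K : fieldType} (A B A' B' l1 l2 : line K) :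
  q_orthogonal A B A' B' l1 l2 <-> dotv (bvec A B A' B' (dirl l1)) (dirl l2) = 0.
Proof.
rewrite /q_orthogonal (_ : qform _ _ _ _ _ _ = dotv (bvec A B A' B' (dirl l1)) (dirl l2)) //.
by rewrite /qform /dotv /bvec /dirl /=; ring.
Qed.

Unset Implicit Arguments.

Theorem corollary6p7 (K : fieldType) (hK : (2 : K) != 0)
  (A B A' B' l : line K) :
  is_quad A B A' B' -> bisector A B A' B' l ->
  exists! l' : line K, bisector A B A' B' l' /\ Q_pair A B A' B' l l'.
Proof.
case=> _ _ pAB pBA' [pA'B' pB'A] hb.
have np : NP A A' B B' by split => //; apply: npar_sym.
have [M1 [[hl1 [hE1 hF1]] bm1]] := char1 hK np hb.
have bnz := bvec_nz pAB pBA' pA'B' pB'A (dirl_nz l).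
have d1 := den_ne pAB; have d2 := den_ne pBA'; have d3 := den_ne pA'B'; have d4 := den_ne pB'A.
have Dnz : den A B * den B A' * den A' B' * den B' A * 2 != 0 by rewrite !mulf_neq0.
have k1 : detv (ecov A A' (M2of A B A' B' M1)) (bvec A B A' B' (dirl l)) = 0.
  move: (key1 hK M1 (dirl l) d1 d2 d3 d4); rewrite hE1 hF1 !mulr0 addr0 => /eqP.
  by rewrite -mulrA mulf_eq0 (negbTE Dnz) orbF => /eqP.
have k2 : detv (ecov B B' (M2of A B A' B' M1)) (bvec A B A' B' (dirl l)) = 0.
  move: (key2 hK M1 (dirl l) d1 d2 d3 d4); rewrite hE1 hF1 !mulr0 addr0 => /eqP.
  by rewrite -mulrA mulf_eq0 (negbTE Dnz) orbF => /eqP.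
have [l' [hb' hl']] := dir_exists (M2of A B A' B' M1) bnz.
have hE2 := perp_dot k1 hb' bnz.
have hF2 := perp_dot k2 hb' bnz.
have [bis' bm2] := char2 hK np hl' hE2 hF2.
exists l'; split.
  split => //; split => //; last by apply/qformE.
  exists M1, (M2of A B A' B' M1); split => //.
  rewrite /avg2 /M2of; case: (centroid A B A' B') => cx cy /=.
  by congr pair; field.
move=> l'' [bis'' [_ _ [p1 [p2 [bp1 bp2 hav]]] qo]].
have e1 : p1 = M1 := bmid_uniq (bp1 : bmid A A' B B' l (PFin p1)) bm1.
subst p1.
have e2 : p2 = M2of A B A' B' M1.
  rewrite /M2of -hav /avg2 /= [p2 in LHS]surjective_pairing.
  by congr pair; field.
subst p2.
have hl'' := bmid_on hK (bp2 : bmid A A' B B' l'' (PFin (M2of A B A' B' M1))).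
move/qformE: qo => qo.
exact: dir_unique bnz hb' qo hl' hl''.
Qed.
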